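(* Let $n \ge 2$ be an integer and let $1 \le \underline{x}_i < \bar{x}_i$ for $i \in \{1,2\}$. Consider the bilevel problem $$\max_{x \in \mathbb{R}^2} \; F(x,y) = x_1 - 2y_{n+1} + y_{n+2} \quad \text{s.t.} \quad (x_1,x_2) \in [\underline{x}_1,\bar{x}_1] \times [\underline{x}_2,\bar{x}_2],\; y \in S(x),$$ where $S(x)$ is the set of optimal solutions of the lower-level problem $$\max_{y \in \mathbb{R}^{n+2}} \; f(x,y) = y_1 - y_n\,(x_1 + x_2 - y_{n+1} - y_{n+2})$$ subject to $y_1 + y_n = \tfrac12$, $y_i^2 \le y_{i+1}$ for $i \in \{1,\dots,n-1\}$, $y_i \ge 0$ for $i \in \{1,\dots,n\}$, $y_{n+1} \in [0,x_1]$, $y_{n+2} \in [-x_2,x_2]$. Then this bilevel problem has a unique solution, given by $x^* = (\underline{x}_1,\bar{x}_2)$, with optimal objective function value $F^* = -\underline{x}_1 + \bar{x}_2$.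
   Context: For every feasible $x$, $S(x)$ is a singleton, so the bilevel problem is well defined (no distinction between optimistic and pessimistic variants is needed). *)

(* Defs.v *)
From HB Require Import structures.
From mathcomp Require Import all_boot all_order all_algebra.
From mathcomp Require Import reals.
Set Implicit Arguments. Unset Strict Implicit. Unset Printing Implicit Defensive.
Import Order.TTheory GRing.Theory Num.Theory.
Local Open Scope ring_scope.

(* Lower-level variable y in R^(n+2), stored as y : 'I_(n.+2) -> R (0-based);
   yc y k is the 1-based coordinate y_k, for 1 <= k <= n+2. *)
Definition yc (R : realType) (n : nat) (y : 'I_n.+2 -> R) (k : nat) : R :=
  y (inord k.-1).

Definition lower_feas (R : realType) (n : nat) (x : R * R) (y : 'I_n.+2 -> R) : Prop :=
  [/\ yc y 1 + yc y n = 1 / 2,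
      (forall i : nat, (1 <= i <= n.-1)%N -> yc y i ^+ 2 <= yc y i.+1),
      (forall i : nat, (1 <= i <= n)%N -> 0 <= yc y i),
      0 <= yc y n.+1 <= x.1 &
      - x.2 <= yc y n.+2 <= x.2].

Definition f_low (R : realType) (n : nat) (x : R * R) (y : 'I_n.+2 -> R) : R :=
  yc y 1 - yc y n * (x.1 + x.2 - yc y n.+1 - yc y n.+2).

Definition S_opt (R : realType) (n : nat) (x : R * R) (y : 'I_n.+2 -> R) : Prop :=
  lower_feas x y /\ (forall z : 'I_n.+2 -> R, lower_feas x z -> f_low x z <= f_low x y).

Definition F_up (R : realType) (n : nat) (x : R * R) (y : 'I_n.+2 -> R) : R :=
  x.1 - 2 * yc y n.+1 + yc y n.+2.

Definition upper_feas (R : realType) (lx1 ux1 lx2 ux2 : R) (x : R * R) : Prop :=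
  lx1 <= x.1 <= ux1 /\ lx2 <= x.2 <= ux2.

Definition bilevel_sol (R : realType) (n : nat) (lx1 ux1 lx2 ux2 : R)
    (x : R * R) (y : 'I_n.+2 -> R) : Prop :=
  [/\ upper_feas lx1 ux1 lx2 ux2 x, S_opt x y &
      forall (x' : R * R) (y' : 'I_n.+2 -> R),
        upper_feas lx1 ux1 lx2 ux2 x' -> S_opt x' y' -> F_up x' y' <= F_up x y].

(* Main.v *)
Require Import Defs.
From HB Require Import structures.
From mathcomp Require Import all_boot all_order all_algebra.
From mathcomp Require Import reals.
From mathcomp Require Import lra zify.
Import Order.TTheory GRing.Theory Num.Theory.
Local Open Scope ring_scope.

Lemma t_ex (R : realType) (N : nat) : (0 < N)%N ->
  exists t : R, 0 <= t <= 1/2 /\ t + t ^+ N = 1/2.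
Proof.
move=> N0.
have h : (0:R) <= 1/2 by lra.
have [|t /andP[t0 t1] rt] := @poly_ivt R ('X + 'X^N - (1/2)%:P) 0 (1/2) h.
  rewrite !hornerE expr0n eqn0Ngt N0 /=.
  have h2 : (0:R) <= 2^-1 by rewrite invr_ge0 ler0n.
  apply/andP; split; first by rewrite sub0r oppr_le0.
  by rewrite addrAC subrr add0r exprn_ge0.
exists t; split; first by rewrite t0 t1.
move: rt; rewrite rootE !hornerE => /eqP.
move=> e; rewrite ?mul1r; apply/eqP; rewrite -subr_eq0; apply/eqP; by rewrite -e ?mul1r.
Qed.

Lemma chain (R : realType) (n : nat) (x : R * R) (z : 'I_n.+2 -> R) :
  lower_feas x z -> forall i, (1 <= i <= n)%N ->
  yc z 1 ^+ (2 ^ i.-1) <= yc z i.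
Proof.
case=> _ Hc Hp _ _; elim=> [//|[|i] IH] Hi; first by rewrite expn0 expr1.
have Hi' : (1 <= i.+1 <= n)%N by lia.
have := IH Hi'.
have := Hc i.+1 ltac:(lia).
move=> h1 h2; apply: le_trans h1.
rewrite /= expnSr exprM.
apply: lerXn2r => //; rewrite nnegrE ?exprn_ge0 //; apply: Hp; lia.
Qed.

Lemma zn_pos (R : realType) (n : nat) (x : R * R) (z : 'I_n.+2 -> R) :
  (1 <= n)%N -> lower_feas x z -> 0 < yc z n.
Proof.
move=> n1 F.
have Hc := @chain _ _ _ _ F n ltac:(lia).
case: F => Hs _ Hp _ _.
have := Hp n ltac:(lia); rewrite le0r => /orP[/eqP e|//].
move: Hc; rewrite e; have -> : yc z 1 = 1/2 by rewrite e addr0 in Hs.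
move=> h; have : (0:R) < (1/2) ^+ (2 ^ n.-1) by apply: exprn_gt0; lra.
lra.
Qed.

Lemma z1_le (R : realType) (n : nat) (x : R * R) (z : 'I_n.+2 -> R) (t : R) :
  (1 <= n)%N -> 0 <= t -> t + t ^+ (2 ^ n.-1) = 1/2 -> lower_feas x z -> yc z 1 <= t.
Proof.
move=> n1 t0 ht F.
have Hc := @chain _ _ _ _ F n ltac:(lia).
have z10 : 0 <= yc z 1 by case: F => _ _ Hp _ _; apply: Hp.
case: F => Hs _ _ _ _.
rewrite leNgt; apply/negP => lt.
have : t ^+ (2 ^ n.-1) <= yc z 1 ^+ (2 ^ n.-1) by apply: lerXn2r; rewrite ?nnegrE // ltW.
lra.
Qed.

Lemma f_le (R : realType) (n : nat) (x : R * R) (z : 'I_n.+2 -> R) :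
  (1 <= n)%N -> lower_feas x z ->
  0 <= x.1 + x.2 - yc z n.+1 - yc z n.+2 /\ f_low x z <= yc z 1.
Proof.
move=> n1 F.
have := @zn_pos _ _ _ _ n1 F.
case: F => _ _ _ /andP[a1 a2] /andP[b1 b2] pn.
have g0 : 0 <= x.1 + x.2 - yc z n.+1 - yc z n.+2 by lra.
split => //; rewrite /f_low.
have := mulr_ge0 (ltW pn) g0; lra.
Qed.

Definition ystar (R : realType) (n : nat) (t : R) (x : R * R) : 'I_n.+2 -> R :=
  fun j => let k := (val j).+1 in
  if (k <= n)%N then t ^+ (2 ^ k.-1) else if k == n.+1 then x.1 else x.2.

Arguments ystar {R} n t x.

Lemma yc_star (R : realType) (n : nat) (t : R) (x : R * R) k :
  (1 <= k <= n.+2)%N -> yc (ystar n t x) k =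
  if (k <= n)%N then t ^+ (2 ^ k.-1) else if k == n.+1 then x.1 else x.2.
Proof.
case: k => // k /andP[_ h]; rewrite /yc /ystar /= inordK //.
Qed.

Lemma yc_le (R : realType) (n : nat) (t : R) (x : R * R) k :
  (1 <= k <= n)%N -> yc (ystar n t x) k = t ^+ (2 ^ k.-1).
Proof.
move=> h; have h1 : (1 <= k <= n.+2)%N by lia.
have h2 : (k <= n)%N by lia.
by rewrite yc_star // h2.
Qed.

Lemma yc_n1 (R : realType) (n : nat) (t : R) (x : R * R) :
  yc (ystar n t x) n.+1 = x.1.
Proof.
have h1 : (1 <= n.+1 <= n.+2)%N by lia.
by rewrite yc_star // ltnn eqxx.
Qed.

Lemma yc_n2 (R : realType) (n : nat) (t : R) (x : R * R) :
  yc (ystar n t x) n.+2 = x.2.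
Proof.
have h1 : (1 <= n.+2 <= n.+2)%N by lia.
have h2 : (n.+2 <= n)%N = false by lia.
have h3 : (n.+2 == n.+1) = false by lia.
by rewrite yc_star // h2 h3.
Qed.

Lemma ystar_feas (R : realType) (n : nat) (t : R) (x : R * R) :
  (2 <= n)%N -> 0 <= t -> t + t ^+ (2 ^ n.-1) = 1/2 -> 0 <= x.1 -> 0 <= x.2 ->
  lower_feas x (ystar n t x).
Proof.
move=> n2 t0 ht x1 x2.
split.
- rewrite !yc_le; try lia.
  by rewrite expn0 expr1.
- move=> i hi; rewrite !yc_le; try lia.
  rewrite -exprM -expnSr.
  by have -> : i.+1.-1 = i.-1.+1 by lia.
- move=> i hi; rewrite yc_le ?exprn_ge0 //.
- by rewrite yc_n1 x1 lexx.
- rewrite yc_n2; apply/andP; split; [lra | exact: lexx].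
Qed.

Lemma f_star (R : realType) (n : nat) (t : R) (x : R * R) :
  (2 <= n)%N -> f_low x (ystar n t x) = t.
Proof.
move=> n2.
rewrite /f_low yc_n1 yc_n2 (@yc_le _ _ _ _ 1); last by lia.
rewrite expn0 expr1.
have -> : x.1 + x.2 - x.1 - x.2 = 0 by lra.
by rewrite mulr0 subr0.
Qed.

Lemma Sopt_F (R : realType) (n : nat) (x : R * R) (y : 'I_n.+2 -> R) (t : R) :
  (2 <= n)%N -> 0 <= t -> t + t ^+ (2 ^ n.-1) = 1/2 -> 0 <= x.1 -> 0 <= x.2 ->
  S_opt x y -> F_up x y = x.2 - x.1.
Proof.
move=> n2 t0 ht x1 x2 [F opt].
have n1 : (1 <= n)%N by lia.
have := opt _ (@ystar_feas _ _ _ _ n2 t0 ht x1 x2); rewrite f_star //.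
have := @z1_le _ _ _ _ _ n1 t0 ht F.
have [g0 fle] := @f_le _ _ _ _ n1 F.
have pn := @zn_pos _ _ _ _ n1 F.
move=> h1 h2.
have e : yc y n * (x.1 + x.2 - yc y n.+1 - yc y n.+2) = 0.
  move: fle h1 h2; rewrite /f_low => fle h1 h2.
  have := mulr_ge0 (ltW pn) g0; lra.
move/eqP: e; rewrite mulf_eq0 (gt_eqF pn) /= => /eqP e.
case: F => _ _ _ /andP[a1 a2] /andP[b1 b2].
rewrite /F_up; lra.
Qed.

Theorem mainTheorem3 (R : realType) (n : nat) (lx1 ux1 lx2 ux2 : R) :
  (2 <= n)%N -> 1 <= lx1 -> lx1 < ux1 -> 1 <= lx2 -> lx2 < ux2 ->
  (exists y : 'I_n.+2 -> R,
      bilevel_sol lx1 ux1 lx2 ux2 (lx1, ux2) y /\ F_up (lx1, ux2) y = - lx1 + ux2) /\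
  (forall (x : R * R) (y : 'I_n.+2 -> R),
      bilevel_sol lx1 ux1 lx2 ux2 x y -> x = (lx1, ux2) /\ F_up x y = - lx1 + ux2).
Proof.
move=> n2 l1 lu1 l2 lu2.
have [t [/andP[t0 _] ht]] := @t_ex R (2 ^ n.-1) ltac:(by rewrite expn_gt0).
have n1 : (1 <= n)%N by lia.
have Sstar : forall x : R * R, 0 <= x.1 -> 0 <= x.2 -> S_opt x (ystar n t x).
  move=> x x1 x2; split; first exact: ystar_feas.
  move=> z Fz; rewrite f_star //.
  have [_ h] := @f_le _ _ _ _ n1 Fz; have := @z1_le _ _ _ _ _ n1 t0 ht Fz; lra.
have Fub : forall (x' : R * R) (y' : 'I_n.+2 -> R),
    upper_feas lx1 ux1 lx2 ux2 x' -> S_opt x' y' -> F_up x' y' = x'.2 - x'.1 /\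
    lx1 <= x'.1 /\ x'.2 <= ux2.
  move=> x' y' [/andP[a1 a2] /andP[b1 b2]] S.
  split; last by split.
  apply: (@Sopt_F _ _ _ _ t n2 t0 ht) S; lra.
have xs1 : 0 <= (lx1, ux2).1 by rewrite /=; lra.
have xs2 : 0 <= (lx1, ux2).2 by rewrite /=; lra.
have Fs : F_up (lx1, ux2) (ystar n t (lx1, ux2)) = - lx1 + ux2.
  rewrite (@Sopt_F _ _ _ _ _ n2 t0 ht xs1 xs2 (Sstar _ xs1 xs2)) /=; lra.
have ufs : upper_feas lx1 ux1 lx2 ux2 (lx1, ux2).
  rewrite /upper_feas /= lexx (ltW lu1) (ltW lu2) lexx; lra.
split.
  exists (ystar n t (lx1, ux2)); split => //; split => //; first exact: Sstar.
  move=> x' y' u S; have [-> [h1 h2]] := Fub x' y' u S; rewrite Fs; lra.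
move=> [a b] y [u S H].
have := H _ _ ufs (Sstar _ xs1 xs2); rewrite Fs.
have [-> [h1 h2]] := Fub _ _ u S; rewrite /= in h1 h2 * => h.
have ea : a = lx1 by lra.
have eb : b = ux2 by lra.
subst; split => //; lra.
Qed.
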